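(* Let $q$ be a prime power, $\eta\ge1$ an integer, $\delta_T<0$ and $\delta_X>0$ integers. Let $C^\star_\eta(\delta_T,\delta_X)$ be the code obtained from $C_\eta(\delta_T,\delta_X)$ by puncturing at the $q+1$ coordinates corresponding to the $\mathbb{F}_q$-rational points of $\mathcal{H}_\eta$ with $x_1=0$ (the points with representatives $(1,a,0,1)$, $a\in\mathbb{F}_q$, and $(0,1,0,1)$). Then $C^\star_\eta(\delta_T,\delta_X)$ has length $q(q+1)$ and has the same dimension and the same minimum distance as $C_\eta(\delta_T,\delta_X)$.
   Context: $R=\mathbb{F}_q[T_1,T_2,X_1,X_2]$; the bidegree of $T_1^{c_1}T_2^{c_2}X_1^{d_1}X_2^{d_2}$ is $(c_1+c_2-\eta d_1,d_1+d_2)$; $R(\delta_T,\delta_X)$ is the span of monomials of that bidegree. The Hirzebruch surface $\mathcal{H}_\eta$ is the quotient of $(\mathbb{A}^2\setminus\{0\})^2$ by $\mathbb{G}_m^2$ acting by $(\lambda,\mu)\cdot(t_1,t_2,x_1,x_2)=(\lambda t_1,\lambda t_2,\mu\lambda^{-\eta}x_1,\mu x_2)$; each of its $(q+1)^2$ $\mathbb{F}_q$-points has a unique representative $(1,a,1,b)$, $(0,1,1,b)$, $(1,a,0,1)$ or $(0,1,0,1)$ ($a,b\in\mathbb{F}_q$), where polynomials are evaluated. $C_\eta(\delta_T,\delta_X)\subset\mathbb{F}_q^{(q+1)^2}$ is the image of $F\mapsto(F(P))_{P\in\mathcal{H}_\eta(\mathbb{F}_q)}$ on $R(\delta_T,\delta_X)$.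 *)

(* Defs.v *)
From HB Require Import structures.
From mathcomp Require Import all_boot all_order all_algebra all_field.
Set Implicit Arguments. Unset Strict Implicit. Unset Printing Implicit Defensive.
Import Order.TTheory GRing.Theory Num.Theory.
Local Open Scope ring_scope.

(* F_q-points of the Hirzebruch surface H_eta, indexed by
   (option F) * (option F):
     (Some a, Some b) <-> (1,a,1,b);  (None, Some b) <-> (0,1,1,b);
     (Some a, None)   <-> (1,a,0,1);  (None, None)   <-> (0,1,0,1).   *)
Definition hpt (F : finFieldType) := (option F * option F)%type.

(* points with x_1 <> 0 (those kept after puncturing) *)
Definition hpt_star (F : finFieldType) := (option F * F)%type.

Definition tcoord (F : finFieldType) (t : option F) : F * F :=
  match t with Some a => (1, a) | None => (0, 1) end.

Definition expo := (nat * nat * nat * nat)%type.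

Definition eval_mono (F : finFieldType) (m : expo) (P : hpt F) : F :=
  let: (c1, c2, d1, d2) := m in
  let: (t1, t2) := tcoord P.1 in
  let: (x1, x2) := tcoord P.2 in
  t1 ^+ c1 * t2 ^+ c2 * x1 ^+ d1 * x2 ^+ d2.

Definition has_bideg (eta : nat) (dT dX : int) (m : expo) : bool :=
  let: (c1, c2, d1, d2) := m in
  ((c1 + c2)%:Z - (eta * d1)%:Z == dT) && ((d1 + d2)%:Z == dX).

(* bound on exponents: any monomial of bidegree (dT,dX) has all exponents
   <= |dT| + eta*|dX| (since d1,d2 <= dX and c1+c2 = dT + eta d1) *)
Definition expo_bound (eta : nat) (dT dX : int) : nat :=
  (`|dT| + eta * `|dX|)%N.

Definition monos (eta : nat) (dT dX : int) : seq expo :=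
  let N := (expo_bound eta dT dX).+1 in
  let s := iota 0 N in
  [seq m <- [seq (cc.1, cc.2, dd.1, dd.2)
              | cc <- [seq (c1, c2) | c1 <- s, c2 <- s],
                dd <- [seq (d1, d2) | d1 <- s, d2 <- s]]
   | has_bideg eta dT dX m].

Definition ev_vec (F : finFieldType) (m : expo) : {ffun hpt F -> F^o} :=
  [ffun P => (eval_mono m P : F^o)].

(* C_eta(dT,dX) : the image of the evaluation map on R(dT,dX), i.e. the span
   of the evaluation vectors of the monomials spanning R(dT,dX) *)
Definition Hcode (F : finFieldType) (eta : nat) (dT dX : int)
  : {vspace {ffun hpt F -> F^o}} :=
  <<[seq ev_vec F m | m <- monos eta dT dX]>>%VS.

Definition restr (F : finFieldType) (v : {ffun hpt F -> F^o})
  : {ffun hpt_star F -> F^o} :=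
  [ffun P : hpt_star F => v (P.1, Some P.2)].

Definition Hcode_star (F : finFieldType) (eta : nat) (dT dX : int)
  : {vspace {ffun hpt_star F -> F^o}} :=
  (linfun (@restr F) @: Hcode F eta dT dX)%VS.

Definition wt (F : finFieldType) (I : finType) (v : {ffun I -> F^o}) : nat :=
  #|[set i | v i != 0]|.

Definition has_min_dist (F : finFieldType) (I : finType)
  (C : {vspace {ffun I -> F^o}}) (d : nat) : Prop :=
  (exists2 v, (v \in C) && (v != 0) & wt v = d) /\
  (forall v, v \in C -> v != 0 -> (d <= wt v)%N).

(* Main.v *)
Require Import Defs.
From HB Require Import structures.
From mathcomp Require Import all_boot all_order all_algebra all_field.
Import Order.TTheory GRing.Theory Num.Theory.
Local Open Scope ring_scope.

Section Aux.
Variable F : finFieldType.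

Lemma restr_lin : linear (@restr F).
Proof. by move=> a u v; apply/ffunP=> P; rewrite !ffunE. Qed.

HB.instance Definition _ := GRing.isLinear.Build F^o _ _ _ (@restr F) restr_lin.

Lemma restrE v : linfun (@restr F) v = restr v.
Proof. by rewrite lfunE. Qed.

Lemma mono_vanish eta dT dX m a :
  dT < 0 -> m \in monos eta dT dX -> eval_mono m (a, None) = 0 :> F.
Proof.
move=> dT0; rewrite mem_filter => /andP[].
case: m => [[[c1 c2] d1] d2] /= /andP[/eqP Hd _] _.
case: d1 Hd => [|d1] Hd.
  by move: dT0; rewrite -Hd muln0 subr0.
by case: (tcoord a) => t1 t2 /=; rewrite expr0n /= !mulr0 mul0r.
Qed.

Lemma code_vanish eta dT dX v a :
  dT < 0 -> v \in Hcode F eta dT dX -> v (a, None) = 0.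
Proof.
move=> dT0; rewrite /Hcode.
set s := [seq _ | _ <- _].
move=> /(coord_span (X := in_tuple s)) ->.
rewrite sum_ffunE big1 // => i _.
rewrite ffunE (nth_map (0%N, 0%N, 0%N, 0%N)); last by rewrite -(size_map (ev_vec F)) ltn_ord.
rewrite ffunE; apply/eqP; rewrite scaler_eq0; apply/orP; right; apply/eqP.
have Hm : nth (0%N, 0%N, 0%N, 0%N) (monos eta dT dX) i \in monos eta dT dX.
  by apply: mem_nth; rewrite -(size_map (ev_vec F)) ltn_ord.
exact: (@mono_vanish eta dT dX _ a dT0 Hm).
Qed.

Lemma restr_inj0 eta dT dX v :
  dT < 0 -> v \in Hcode F eta dT dX -> restr v = 0 -> v = 0.
Proof.
move=> dT0 vC /ffunP H; apply/ffunP => -[a [b|]]; rewrite ffunE.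
  by have := H (a, b); rewrite !ffunE.
exact: (code_vanish _ _ _ _ a dT0 vC).
Qed.

Lemma wt_restr eta dT dX v :
  dT < 0 -> v \in Hcode F eta dT dX -> wt (restr v) = wt v.
Proof.
move=> dT0 vC; rewrite /wt.
have inj : injective (fun P : hpt_star F => (P.1, Some P.2)).
  by move=> [a b] [c d] /= [-> ->].
rewrite -(card_imset _ inj); apply: eq_card => -[a [b|]].
- rewrite inE; apply/imsetP/idP.
    by move=> [[c d]]; rewrite inE ffunE /= => ? [-> ->].
  by move=> H; exists (a, b) => //; rewrite inE ffunE.
- rewrite inE (code_vanish _ _ _ _ a dT0 vC) eqxx; apply/imsetP => -[[c d] _] /=; by case.
Qed.
End Aux.

Theorem theorem6p1 (F : finFieldType) (eta : nat) (dT dX : int) :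
  (1 <= eta)%N -> dT < 0 -> 0 < dX ->
  #|{: hpt_star F}| = (#|F| * (#|F| + 1))%N /\
  \dim (Hcode_star F eta dT dX) = \dim (Hcode F eta dT dX) /\
  (forall d : nat,
     has_min_dist (Hcode_star F eta dT dX) d <-> has_min_dist (Hcode F eta dT dX) d).
Proof.
move=> _ dT0 _.
split; first by rewrite card_prod card_option mulnC addn1.
split.
  apply: limg_dim_eq; apply/eqP; rewrite -subv0; apply/subvP => v.
  rewrite memv_cap memv_ker restrE memv0 => /andP[vC /eqP H].
  by apply/eqP; apply: restr_inj0 vC H.
have nz v : v \in Hcode F eta dT dX -> (restr v != 0) = (v != 0).
  move=> vC; apply/idP/idP; first by apply: contraNneq => ->; apply/eqP/ffunP=> P; rewrite !ffunE.
  by apply: contraNneq => /(restr_inj0 _ _ _ _ _ dT0 vC) ->.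
move=> d; split.
- move=> [[w /andP[/memv_imgP [v vC ->] wn] wd] H]; rewrite restrE in wn wd.
  split.
    by exists v; [rewrite vC -nz | rewrite -(wt_restr _ _ _ _ _ dT0 vC)].
  move=> u uC un; rewrite -(wt_restr _ _ _ _ _ dT0 uC); apply: H; last by rewrite nz.
  by rewrite -restrE memv_img.
- move=> [[v /andP[vC vn] vd] H]; split.
    exists (restr v); last by rewrite (wt_restr _ _ _ _ _ dT0 vC).
    by rewrite -{1}restrE memv_img //= nz.
  move=> w /memv_imgP [u uC ->]; rewrite restrE nz // => un.
  by rewrite (wt_restr _ _ _ _ _ dT0 uC); apply: H.
Qed.
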